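(* Let $X$ be a nonempty compact metric space and $Y\subseteq X$ a dense subset, endowed with the induced metric. Then $d^{us}_{GH}(X,Y)=0$.
   Context: For a metric space, $|xy|$ denotes distance. A set-valued map $f:X\rightrightarrows Y$ assigns to each $x\in X$ a nonempty $f(x)\subseteq Y$ and is identified with its graph. A correspondence between $X$ and $Y$ is a subset $R\subseteq X\times Y$ whose projections to $X$ and to $Y$ are both surjective, regarded as the set-valued map $x\mapsto R(x)=\{y:(x,y)\in R\}$; $R^{-1}=\{(y,x):(x,y)\in R\}$; $\mathcal R(X,Y)$ is the set of all correspondences. The distortion of a nonempty $\sigma\subseteq X\times Y$ is $\operatorname{dis}\sigma=\sup\{||xx'|-|yy'||:(x,y),(x',y')\in\sigma\}\in[0,\infty]$. A set-valued map $f$ is upper semicontinuous if for every $x$ and every open $U\supseteq f(x)$ there is a neighborhood $V$ of $x$ with $f(x')\subseteq U$ for all $x'\in V$. $\mathcal R_{us}(X,Y)$ is the set of $R\in\mathcal R(X,Y)$ with both $R$ and $R^{-1}$ upper semicontinuous, and $d^{us}_{GH}(X,Y)=\frac12\inf\{\operatorname{dis}R:R\in\mathcal R_{us}(X,Y)\}$. *)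

(* Defs.v *)
From Stdlib Require Import Reals List.
From Coquelicot Require Import Coquelicot.
Open Scope R_scope.

Definition is_metric {X : Type} (d : X -> X -> R) : Prop :=
  (forall x y, 0 <= d x y) /\
  (forall x y, d x y = 0 <-> x = y) /\
  (forall x y, d x y = d y x) /\
  (forall x y z, d x z <= d x y + d y z).

Definition mopen {X : Type} (d : X -> X -> R) (U : X -> Prop) : Prop :=
  forall x, U x -> exists e, 0 < e /\ forall z, d x z < e -> U z.

Definition mnbhd {X : Type} (d : X -> X -> R) (x : X) (V : X -> Prop) : Prop :=
  exists e, 0 < e /\ forall z, d x z < e -> V z.

Definition mcompact {X : Type} (d : X -> X -> R) : Prop :=
  forall (I : Type) (U : I -> X -> Prop),
    (forall i, mopen d (U i)) -> (forall x, exists i, U i x) ->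
    exists l : list I, forall x, exists i, In i l /\ U i x.

Definition mdense {X : Type} (d : X -> X -> R) (Y : X -> Prop) : Prop :=
  forall x e, 0 < e -> exists y, Y y /\ d x y < e.

Definition induced {X : Type} (d : X -> X -> R) (Y : X -> Prop)
  : {x : X | Y x} -> {x : X | Y x} -> R :=
  fun a b => d (proj1_sig a) (proj1_sig b).

(* Set-valued maps and correspondences, identified with relations (graphs). *)
Definition setvalued {X Y : Type} (f : X -> Y -> Prop) : Prop :=
  forall x, exists y, f x y.

Definition rinv {X Y : Type} (R0 : X -> Y -> Prop) : Y -> X -> Prop :=
  fun y x => R0 x y.

Definition correspondence {X Y : Type} (R0 : X -> Y -> Prop) : Prop :=
  (forall x, exists y, R0 x y) /\ (forall y, exists x, R0 x y).

Definition usc {X Y : Type} (dX : X -> X -> R) (dY : Y -> Y -> R)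
  (f : X -> Y -> Prop) : Prop :=
  forall x (U : Y -> Prop), mopen dY U -> (forall y, f x y -> U y) ->
    exists V, mnbhd dX x V /\ forall x', V x' -> forall y, f x' y -> U y.

(* Distortion of a (nonempty) relation, a value in [0, +oo]. *)
Definition dis {X Y : Type} (dX : X -> X -> R) (dY : Y -> Y -> R)
  (s : X -> Y -> Prop) : Rbar :=
  Rbar_lub (fun r : Rbar => exists x y x' y', s x y /\ s x' y' /\
                 r = Finite (Rabs (dX x x' - dY y y'))).

Definition R_us {X Y : Type} (dX : X -> X -> R) (dY : Y -> Y -> R)
  (R0 : X -> Y -> Prop) : Prop :=
  correspondence R0 /\ usc dX dY R0 /\ usc dY dX (rinv R0).

(* d^us_GH(X,Y) = 1/2 inf { dis R : R in R_us(X,Y) }  (inf of empty set = +oo) *)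
Definition dGH_us {X Y : Type} (dX : X -> X -> R) (dY : Y -> Y -> R) : Rbar :=
  Rbar_mult (Finite (/ 2))
    (Rbar_glb (fun r : Rbar => exists R0, R_us dX dY R0 /\ r = dis dX dY R0)).

(* Main.v *)
Require Import Defs.
From Stdlib Require Import Reals Lra List.
From Coquelicot Require Import Coquelicot.
Open Scope R_scope.

Lemma lub_spec (E : Rbar -> Prop) : Rbar_is_lub E (Rbar_lub E).
Proof. unfold Rbar_lub; destruct (Rbar_ex_lub E); auto. Qed.
Lemma glb_spec (E : Rbar -> Prop) : Rbar_is_glb E (Rbar_glb E).
Proof. unfold Rbar_glb; destruct (Rbar_ex_glb E); auto. Qed.

Lemma local_lemma (X I : Type) (d : X -> X -> R) (c : I -> X) (eps : R) :
  is_metric d -> forall (l : list I) (x : X), exists e, 0 < e /\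
  forall z, d x z < e -> forall i, In i l -> d z (c i) <= eps -> d x (c i) <= eps.
Proof.
  intros [H0 [H1 [Hs Ht]]] l x; induction l as [|a l IH].
  - exists 1; split; [lra|]. intros z _ i Hi; destruct Hi.
  - destruct IH as [e [He IH]].
    destruct (Rle_dec (d x (c a)) eps) as [Ha|Ha].
    + exists e; split; auto. intros z Hz i [<-|Hi] Hzi; auto. apply (IH z Hz i Hi Hzi).
    + exists (Rmin e (d x (c a) - eps)); split.
      { apply Rmin_pos; lra. }
      intros z Hz i [<-|Hi] Hzi.
      * exfalso. pose proof (Rmin_r e (d x (c a) - eps)).
        pose proof (Ht x z (c a)). lra.
      * apply (IH z); auto. pose proof (Rmin_l e (d x (c a) - eps)); lra.
Qed.

Lemma dis_ge0 {A B : Type} (dA : A -> A -> R) (dB : B -> B -> R) (s : A -> B -> Prop) a b :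
  s a b -> Rbar_le (Finite 0) (dis dA dB s).
Proof.
  intros Hs. eapply Rbar_le_trans; [|apply (proj1 (lub_spec _))].
  2:{ exists a, b, a, b. split; auto. }
  simpl. apply Rabs_pos.
Qed.

Theorem mainTheorem7 (X : Type) (d : X -> X -> R) (Y : X -> Prop) :
  is_metric d -> inhabited X -> mcompact d -> mdense d Y ->
  dGH_us d (induced d Y) = Finite 0.
Proof.
  intros Hm [x0] Hc Hd.
  pose proof Hm as [H0 [H1 [Hs Ht]]].
  assert (Key : forall eps, 0 < eps -> exists R0, R_us d (induced d Y) R0 /\
     Rbar_le (Finite 0) (dis d (induced d Y) R0) /\
     Rbar_le (dis d (induced d Y) R0) (Finite (4 * eps))).
  { intros eps Heps.
    set (c := fun i : {x : X | Y x} => proj1_sig i).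
    destruct (Hc {x : X | Y x} (fun i x => d (c i) x < eps)) as [l Hl].
    { intros i x Hx. exists (eps - d (c i) x); split; [lra|].
      intros z Hz. pose proof (Ht (c i) x z); lra. }
    { intros x. destruct (Hd x eps Heps) as [y [Hy Hxy]].
      exists (exist _ y Hy). unfold c; simpl. rewrite Hs; auto. }
    set (R0 := fun (x : X) (y : {x : X | Y x}) => exists i, In i l /\
                  d x (c i) <= eps /\ d (proj1_sig y) (c i) <= eps).
    assert (Hcor : correspondence R0).
    { split.
      - intros x. destruct (Hl x) as [i [Hi Hix]]. exists i. exists i.
        split; auto. split. rewrite Hs; lra.
        unfold c. rewrite (proj2 (H1 _ _) eq_refl); lra.
      - intros y. destruct (Hl (proj1_sig y)) as [i [Hi Hix]].
        exists (proj1_sig y). exists i. split; auto. rewrite Hs; lra. }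
    exists R0. split; [split; [exact Hcor|split]|split].
    - intros x U _ HU. destruct (local_lemma X _ d c eps Hm l x) as [e [He Hloc]].
      exists (fun z => d x z < e). split. { exists e; split; auto. }
      intros x' Hx' y [i [Hi [Hx'i Hyi]]]. apply HU. exists i. split; auto.
      split; auto. apply (Hloc x'); auto.
    - intros y U _ HU.
      destruct (local_lemma X _ d c eps Hm l (proj1_sig y)) as [e [He Hloc]].
      exists (fun z => induced d Y y z < e). split. { exists e; split; auto. }
      intros y' Hy' x [i [Hi [Hxi Hy'i]]]. apply HU. exists i. split; auto.
      split; auto. apply (Hloc (proj1_sig y')); auto.
    - destruct (proj1 Hcor x0) as [y Hy].
      exact (dis_ge0 _ _ _ _ _ Hy).
    - apply (proj2 (lub_spec _)). intros r [x [y [x' [y' [Hxy [Hxy' ->]]]]]].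
      simpl. unfold induced.
      destruct Hxy as [i [_ [Hxi Hyi]]]. destruct Hxy' as [j [_ [Hxj Hyj]]].
      pose proof (Ht x (c i) (proj1_sig y)). pose proof (Hs (proj1_sig y) (c i)).
      pose proof (Ht x' (c j) (proj1_sig y')). pose proof (Hs (proj1_sig y') (c j)).
      pose proof (Ht x (proj1_sig y) x'). pose proof (Ht (proj1_sig y) x' (proj1_sig y')).
      pose proof (Ht (proj1_sig y) x (proj1_sig y')). pose proof (Ht x x' (proj1_sig y')).
      pose proof (Hs x (proj1_sig y)). pose proof (Hs x' (proj1_sig y')). pose proof (Ht (proj1_sig y) (proj1_sig y') x').
      unfold Rabs; destruct (Rcase_abs _); lra. }
  set (S := fun r : Rbar => exists R0, R_us d (induced d Y) R0 /\ r = dis d (induced d Y) R0).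
  assert (Hlow : Rbar_le (Finite 0) (Rbar_glb S)).
  { apply (proj2 (glb_spec S)). intros r [R0 [HR ->]].
    destruct HR as [[Hx _] _]. destruct (Hx x0) as [y Hy].
    exact (dis_ge0 _ _ _ _ _ Hy). }
  assert (Hup : forall eps, 0 < eps -> Rbar_le (Rbar_glb S) (Finite (4 * eps))).
  { intros eps Heps. destruct (Key eps Heps) as [R0 [HR [_ Hle]]].
    eapply Rbar_le_trans; [|exact Hle]. apply (proj1 (glb_spec S)).
    exists R0; auto. }
  unfold dGH_us. fold S.
  destruct (Rbar_glb S) as [g| |] eqn:Eg; simpl in Hlow.
  - assert (g = 0).
    { destruct (Rle_lt_or_eq_dec 0 g Hlow) as [Hg|Hg]; auto.
      specialize (Hup (g / 8) ltac:(lra)). simpl in Hup. lra. }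
    subst g. simpl. f_equal. ring.
  - specialize (Hup 1 ltac:(lra)). simpl in Hup. contradiction.
  - contradiction.
Qed.
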